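(* Let $\Gamma$ be a finite simplicial graph with property (B2): for all $v,w\in V(\Gamma)$ with $v\le w$ there exists $u\in V(\Gamma)$, $u\ne v,w$, with $v\le u\le w$. Let $v,w\in V(\Gamma)$ be distinct with $v\le w$, and let $t_{vw}$ be the corresponding transvection. Then for every integer $m\ge 0$, $t_{vw}^{m^2}\in\mathrm{S}\mathcal{I}A'_\Gamma(m)$.
   Context: $n=|V(\Gamma)|$. For $v\in V(\Gamma)$, $\mathrm{lk}(v)$ is the set of vertices adjacent to $v$ and $\mathrm{st}(v)=\mathrm{lk}(v)\cup\{v\}$; $v\le w$ iff $\mathrm{lk}(v)\subset\mathrm{st}(w)$. $A_\Gamma=\langle V(\Gamma)\mid [u,v]=1 \text{ whenever } u,v \text{ adjacent}\rangle$. Transvection: for distinct $v,w$ with $v\le w$, $t_{vw}$ maps $v\mapsto vw$, fixing other vertices; partial conjugation $c_{v,Y}$ ($Y$ a connected component of $\Gamma-\mathrm{st}(v)$) maps $x\mapsto v^{-1}xv$ for $x\in Y$, fixing others. $\mathrm{SAut}^0(A_\Gamma)$ is generated by transvections and partial conjugations; $\mathrm{S}\mathcal{I}A_\Gamma(m)$ is the kernel of $\mathrm{SAut}^0(A_\Gamma)\to\mathrm{SL}(n,\mathbb{Z})\to\mathrm{SL}(n,\mathbb{Z}/m\mathbb{Z})$ (action on $H_1(A_\Gamma;\mathbb Z)=\mathbb Z^n$, then reduction mod $m$), and $\mathrm{S}\mathcal{I}A'_\Gamma(m)$ denotes its commutator subgroup. *)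

(* Defs.v *)
From mathcomp Require Import all_boot all_order all_algebra.
Set Implicit Arguments. Unset Strict Implicit. Unset Printing Implicit Defensive.
Import GRing.Theory Num.Theory.

(* A finite simplicial graph: vertex type V : finType, adjacency adj : rel V
   (assumed symmetric and irreflexive in the theorem). *)
Section RAAG.
Variables (V : finType) (adj : rel V).

Definition lk (v : V) : {set V} := [set u | adj v u].
Definition st (v : V) : {set V} := v |: lk v.
Definition vle (v w : V) : bool := lk v \subset st w.

Definition B2 : Prop :=
  forall v w : V, v != w -> vle v w ->
    exists u : V, [/\ u != v, u != w, vle v u & vle u w].

Definition adj_off (v : V) : rel V :=
  fun a b => [&& adj a b, a \notin st v & b \notin st v].
Definition is_component (v : V) (Y : {set V}) : Prop :=
  exists2 x : V, x \notin st v & Y = [set y | connect (adj_off v) x y].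

(* Elements of A_Gamma are represented by words: a letter (x, b) is x if
   b = false and x^-1 if b = true. *)
Definition letter := (V * bool)%type.
Definition word := seq letter.
Definition linv (l : letter) : letter := (l.1, ~~ l.2).
Definition winv (u : word) : word := rev (map linv u).

(* The equality of A_Gamma = < V | [u,v] = 1 for adjacent u,v > *)
Inductive raag_eq : word -> word -> Prop :=
| re_refl u : raag_eq u u
| re_sym u u' : raag_eq u u' -> raag_eq u' u
| re_trans u u' u'' : raag_eq u u' -> raag_eq u' u'' -> raag_eq u u''
| re_cat u u' w w' : raag_eq u u' -> raag_eq w w' -> raag_eq (u ++ w) (u' ++ w')
| re_free x b : raag_eq [:: (x, b); (x, ~~ b)] [::]
| re_comm x y b c : adj x y -> raag_eq [:: (x, b); (y, c)] [:: (y, c); (x, b)].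

(* An endomorphism of A_Gamma is given by the images of the generators. *)
Definition gmap := V -> word.
Definition subst (f : gmap) (u : word) : word :=
  flatten (map (fun l : letter => if l.2 then winv (f l.1) else f l.1) u).
Definition gid : gmap := fun x => [:: (x, false)].
Definition aut_eq (f g : gmap) : Prop := forall x, raag_eq (f x) (g x).

Inductive gen :=
| Tr of V & V
| PC of V & {set V}.

Definition gen_valid (s : gen) : Prop :=
  match s with
  | Tr v w => v != w /\ vle v w
  | PC v Y => is_component v Y
  end.

(* the generator (b = false) or its inverse (b = true) as a map on generators *)
Definition gen_map (s : gen) (b : bool) : gmap :=
  match s with
  | Tr v w => fun x => if x == v then [:: (v, false); (w, b)] else [:: (x, false)]
  | PC v Y => fun x => if x \in Y then [:: (v, ~~ b); (x, false); (v, b)]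
                       else [:: (x, false)]
  end.

(* formal words in the generators and their inverses: elements of SAut^0 *)
Definition fword := seq (gen * bool).
End RAAG.

Section RAAG2.
Variables (V : finType) (adj : rel V).

Fixpoint fvalid (s : fword V) : Prop :=
  match s with [::] => True | p :: r => gen_valid adj p.1 /\ fvalid r end.

(* evaluation: [s1; ...; sk] |-> s1 o s2 o ... o sk *)
Fixpoint feval (s : fword V) : gmap V :=
  match s with
  | [::] => @gid V
  | p :: r => fun x => subst (gen_map p.1 p.2) (feval r x)
  end.

Definition finv (s : fword V) : fword V := rev (map (fun p => (p.1, ~~ p.2)) s).
Definition fcomm (a b : fword V) : fword V := finv a ++ finv b ++ a ++ b.

(* exponent sum of generator y in a word: the action on H_1 = Z^n *)
Definition expsum (y : V) (u : word V) : int :=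
  \sum_(l <- u | l.1 == y) (if l.2 then (-1)%R else 1%R).

(* S IA_Gamma(m): elements of SAut^0 acting trivially on H_1(A_Gamma; Z/mZ) *)
Definition in_SIA (m : nat) (s : fword V) : Prop :=
  fvalid s /\
  forall x y : V, (expsum y (feval s x) = (x == y)%:Z %[mod m%:Z])%Z.

(* S IA'_Gamma(m): commutator subgroup of S IA_Gamma(m), i.e. the set of
   products of commutators of elements of S IA_Gamma(m). *)
Definition in_SIA' (m : nat) (s : fword V) : Prop :=
  exists cs : seq (fword V * fword V),
    foldr (fun c P => (in_SIA m c.1 /\ in_SIA m c.2) /\ P) True cs /\
    aut_eq adj (feval s) (feval (flatten (map (fun c => fcomm c.1 c.2) cs))).

End RAAG2.

(* Main.v *)
From Pilot Require Import Defs.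
From mathcomp Require Import all_boot all_order all_algebra.
From mathcomp Require Import ring.
Import Pilot.Defs.
Set Implicit Arguments. Unset Strict Implicit. Unset Printing Implicit Defensive.

Section Words.
Variables (V : finType) (adj : rel V).
Hypothesis adj_sym : symmetric adj.
Hypothesis adj_irr : irreflexive adj.

Local Notation req := (raag_eq adj).

Lemma req_refl u : req u u. Proof. exact: re_refl. Qed.
Lemma req_sym u w : req u w -> req w u. Proof. exact: re_sym. Qed.
Lemma req_trans u w z : req u w -> req w z -> req u z. Proof. exact: re_trans. Qed.
Lemma req_via M u z : req u M -> req M z -> req u z. Proof. exact: re_trans. Qed.
Lemma req_catl u w w' : req w w' -> req (u ++ w) (u ++ w').
Proof. by move=> h; apply: re_cat => //; apply: re_refl. Qed.
Lemma req_catr u u' w : req u u' -> req (u ++ w) (u' ++ w).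
Proof. by move=> h; apply: re_cat => //; apply: re_refl. Qed.
Lemma req_cons l w w' : req w w' -> req (l :: w) (l :: w').
Proof. by move=> h; apply: (req_catl [:: l] h). Qed.

Lemma linvK : involutive (@linv V). Proof. by case=> x b; rewrite /linv /= negbK. Qed.
Lemma winv_cat (u w : word V) : winv (u ++ w) = winv w ++ winv u.
Proof. by rewrite /winv map_cat rev_cat. Qed.
Lemma winvK : involutive (@winv V).
Proof. by move=> u; rewrite /winv map_rev revK -map_comp (eq_map linvK) map_id. Qed.
Lemma winv_cons l (u : word V) : winv (l :: u) = winv u ++ [:: linv l].
Proof. by rewrite /winv /= rev_cons -cats1. Qed.

Lemma req_letter_inv (l : letter V) : req [:: l; linv l] [::].
Proof. by case: l => x b; apply: re_free. Qed.
Lemma req_letter_inv' (l : letter V) : req [:: linv l; l] [::].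
Proof. by have := req_letter_inv (linv l); rewrite linvK. Qed.

Lemma req_invr u : req (u ++ winv u) [::].
Proof.
elim: u => [|l u IH] /=; first exact: req_refl.
rewrite winv_cons.
apply: req_trans (req_letter_inv l).
have -> : l :: u ++ winv u ++ [:: linv l] = [:: l] ++ (u ++ winv u) ++ [:: linv l] by rewrite catA.
by apply: req_catl; apply: (req_catr _ IH).
Qed.
Lemma req_invl u : req (winv u ++ u) [::].
Proof. by have := req_invr (winv u); rewrite winvK. Qed.

Lemma req_cancel u p w : req (u ++ p ++ winv p ++ w) (u ++ w).
Proof.
apply: req_catl; rewrite catA.
by apply: (@req_trans _ ([::] ++ w)); [apply: req_catr; apply: req_invr|apply: req_refl].
Qed.
Lemma req_cancel' u p w : req (u ++ winv p ++ p ++ w) (u ++ w).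
Proof. by have := req_cancel u (winv p) w; rewrite winvK. Qed.

Lemma req_winv u w : req u w -> req (winv u) (winv w).
Proof.
elim=> {u w} [u|u u' _ IH|u u' u'' _ IH1 _ IH2|u u' w w' _ IH1 _ IH2|x b|x y b c hxy].
- exact: req_refl.
- exact: req_sym.
- exact: req_trans IH1 IH2.
- by rewrite !winv_cat; apply: re_cat.
- by rewrite /winv /= /linv /= negbK; apply: re_free.
- by rewrite /winv /= /linv /=; apply: re_comm; rewrite adj_sym.
Qed.


Definition wcomm (p q : word V) := req (p ++ q) (q ++ p).

Lemma wcomm_sym p q : wcomm p q -> wcomm q p.
Proof. exact: req_sym. Qed.

Lemma wcomm_winvl p q : wcomm p q -> wcomm (winv p) q.
Proof.
move=> h; rewrite /wcomm.
apply: (@req_trans _ (winv p ++ q ++ p ++ winv p)).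
  by apply: req_sym; have := req_cancel (winv p ++ q) p [::]; rewrite !cats0 -!catA.
apply: (@req_trans _ (winv p ++ p ++ q ++ winv p)).
  by rewrite [q ++ _]catA [p ++ (q ++ _)]catA; apply: req_catl; apply: req_catr; apply: req_sym.
by have := req_cancel' [::] p (q ++ winv p).
Qed.

Lemma wcomm_winvr p q : wcomm p q -> wcomm p (winv q).
Proof. by move=> h; apply: wcomm_sym; apply: wcomm_winvl; apply: wcomm_sym. Qed.

Lemma wcomm_catl p p' q : wcomm p q -> wcomm p' q -> wcomm (p ++ p') q.
Proof.
move=> h1 h2; rewrite /wcomm -catA.
apply: (@req_trans _ (p ++ q ++ p')); first exact: req_catl.
by rewrite !catA; apply: req_catr.
Qed.

Lemma wcomm_catr p q q' : wcomm p q -> wcomm p q' -> wcomm p (q ++ q').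
Proof. by move=> h1 h2; apply: wcomm_sym; apply: wcomm_catl; apply: wcomm_sym. Qed.

Lemma wcomm_nil p : wcomm [::] p.
Proof. by rewrite /wcomm cats0; apply: req_refl. Qed.

Definition Fl (f : gmap V) (l : letter V) : word V := if l.2 then winv (f l.1) else f l.1.

Lemma subst_nil (f : gmap V) : subst f [::] = [::]. Proof. by []. Qed.
Lemma subst_cons (f : gmap V) l u : subst f (l :: u) = Fl f l ++ subst f u. Proof. by []. Qed.
Lemma subst_cat (f : gmap V) u w : subst f (u ++ w) = subst f u ++ subst f w.
Proof. by rewrite /subst map_cat flatten_cat. Qed.
Lemma subst_letter (f : gmap V) x : subst f [:: (x, false)] = f x.
Proof. by rewrite subst_cons cats0. Qed.

Lemma Fl_linv (f : gmap V) l : Fl f (linv l) = winv (Fl f l).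
Proof. by case: l => x [] /=; rewrite /Fl /= ?winvK. Qed.

Lemma subst_winv (f : gmap V) u : subst f (winv u) = winv (subst f u).
Proof.
elim: u => [|l u IH]; first by [].
rewrite winv_cons subst_cat IH (subst_cons f l u) winv_cat.
by rewrite subst_cons subst_nil cats0 Fl_linv.
Qed.

Lemma subst_comp (f g : gmap V) u : subst f (subst g u) = subst (fun x => subst f (g x)) u.
Proof.
elim: u => [|[x b] u IH]; first by [].
rewrite !subst_cons subst_cat IH; congr (_ ++ _).
by rewrite /Fl /=; case: b => //; rewrite subst_winv.
Qed.

Lemma subst_ext (f g : gmap V) u : (forall x, f x = g x) -> subst f u = subst g u.
Proof. by move=> h; rewrite /subst; congr flatten; apply: eq_map => l; rewrite h. Qed.

Lemma subst_req_map (f g : gmap V) u : (forall x, req (f x) (g x)) -> req (subst f u) (subst g u).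
Proof.
move=> h; elim: u => [|[x b] u IH]; first exact: req_refl.
rewrite !subst_cons; apply: re_cat => //; rewrite /Fl /=; case: b => /=; last exact: h.
exact: req_winv.
Qed.

Definition hom (f : gmap V) := forall x y, adj x y -> wcomm (f x) (f y).

Lemma subst_req (f : gmap V) u w : hom f -> req u w -> req (subst f u) (subst f w).
Proof.
move=> hf; elim=> {u w} [u|u u' _ IH|u u' u'' _ IH1 _ IH2|u u' w w' _ IH1 _ IH2|x b|x y b c hxy].
- exact: req_refl.
- exact: req_sym.
- exact: req_trans IH1 IH2.
- by rewrite !subst_cat; apply: re_cat.
- rewrite subst_cons subst_cons cats0 /Fl /=; case: b => /=.
    exact: req_invl.
  exact: req_invr.
- rewrite !subst_cons !cats0 /Fl /=.
  have h := hf _ _ hxy.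
  case: b; case: c => /=.
  + by apply: wcomm_winvl; apply: wcomm_winvr.
  + exact: wcomm_winvl.
  + exact: wcomm_winvr.
  + exact: h.
Qed.

Lemma hom_comp (f g : gmap V) : hom f -> hom g -> hom (fun x => subst f (g x)).
Proof.
move=> hf hg x y hxy; rewrite /wcomm -!subst_cat; apply: subst_req => //.
exact: hg.
Qed.


Definition okc (x y : V) := (x == y) || adj x y.

Lemma wcomm_letters x y b c : okc x y -> wcomm [:: (x, b)] [:: (y, c)].
Proof.
case/orP=> [/eqP <-|hxy]; last exact: re_comm.
rewrite /wcomm /=; case: (eqVneq b c) => [<-|]; first exact: req_refl.
move=> hbc; have -> : c = ~~ b by case: b c hbc => [] [].
apply: (@req_trans _ [::]); first exact: re_free.
by apply: req_sym; have := re_free adj x (~~ b); rewrite negbK.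
Qed.

Lemma wcomm_conj c p q : wcomm p q -> wcomm (c ++ p ++ winv c) (c ++ q ++ winv c).
Proof.
move=> h; rewrite /wcomm.
apply: (@req_trans _ (c ++ (p ++ q) ++ winv c)).
  by have := req_cancel' (c ++ p) c (q ++ winv c); rewrite -!catA.
apply: (@req_trans _ (c ++ (q ++ p) ++ winv c)).
  by apply: req_catl; apply: req_catr.
by apply: req_sym; have := req_cancel' (c ++ q) c (p ++ winv c); rewrite -!catA.
Qed.

End Words.

Section Fwords.
Variables (V : finType) (adj : rel V).
Hypothesis adj_sym : symmetric adj.
Hypothesis adj_irr : irreflexive adj.
Local Notation req := (raag_eq adj).

Lemma subst_gid (u : word V) : subst (@gid V) u = u.
Proof.
elim: u => [|[x b] u IH]; first by [].
by rewrite subst_cons IH /Fl /=; case: b.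
Qed.

Lemma feval_cat (s t : fword V) x : feval (s ++ t) x = subst (feval s) (feval t x).
Proof.
elim: s x => [|p s IH] x /=; first by rewrite subst_gid.
by rewrite IH subst_comp.
Qed.

Lemma feval_cons (p : gen V * bool) s x : feval (p :: s) x = subst (gen_map p.1 p.2) (feval s x).
Proof. by []. Qed.

Definition fequiv (s t : fword V) := forall x, req (feval s x) (feval t x).

Lemma fequiv_refl s : fequiv s s. Proof. by move=> x; apply: req_refl. Qed.
Lemma fequiv_sym s t : fequiv s t -> fequiv t s. Proof. by move=> h x; apply: req_sym. Qed.
Lemma fequiv_trans s t r : fequiv s t -> fequiv t r -> fequiv s r.
Proof. by move=> h1 h2 x; apply: req_trans (h2 x). Qed.

Lemma mem_Y_notin_st u (Y : {set V}) y : is_component adj u Y -> y \in Y -> y \notin st adj u.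
Proof.
case=> x0 hx0 -> ; rewrite inE => /connectP [p hp ->] {y}.
elim: p x0 hx0 hp => [|z p IH] x0 hx0 //= /andP [h1 h2].
apply: IH h2; by case/and3P: h1.
Qed.

Lemma mem_Y_step u (Y : {set V}) y z : is_component adj u Y -> y \in Y -> adj y z ->
  z \notin st adj u -> z \in Y.
Proof.
move=> hc hy hyz hz; have hy' := mem_Y_notin_st hc hy.
case: hc hy => x0 hx0 -> ; rewrite !inE => hy.
apply: connect_trans hy _; apply: connect1; rewrite /adj_off hyz hy' hz.
by [].
Qed.

Lemma in_st u y : (y \in st adj u) = (y == u) || adj u y.
Proof. by rewrite /st /lk !inE. Qed.

Lemma hom_gid : hom adj (@gid V).
Proof. by move=> x y hxy; apply: re_comm. Qed.

Lemma hom_gen (p : gen V) b : gen_valid adj p -> hom adj (gen_map p b).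
Proof.
case: p => [v w|u Y] /= hv x y hxy.
- case: hv => hvw hle.
  have key : forall z, adj v z -> okc adj w z.
    move=> z hz; have := subsetP hle z; rewrite /lk inE => /(_ hz).
    by rewrite in_st /okc eq_sym.
  case: (eqVneq x v) => [ex|nx]; case: (eqVneq y v) => [ey|ny].
  + by move: hxy; rewrite ex ey adj_irr.
  + rewrite ex in hxy.
    rewrite -[[:: _; _]]/([:: (v, false)] ++ [:: (w, b)]).
    apply: wcomm_catl; first by apply: wcomm_letters; rewrite /okc hxy orbT.
    exact: wcomm_letters (key _ hxy).
  + rewrite ey in hxy.
    rewrite -[[:: (v,false); _]]/([:: (v, false)] ++ [:: (w, b)]).
    apply: wcomm_catr; first by apply: wcomm_letters; rewrite /okc hxy orbT.
    by apply: wcomm_sym; apply: wcomm_letters; apply: key; rewrite adj_sym.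
  + exact: re_comm.
- have hvY : forall z, z \in Y -> z \notin st adj u by move=> z; exact: mem_Y_notin_st.
  have cY : forall z, z \in Y -> (u, ~~ b) :: (z, false) :: [:: (u, b)] =
     [:: (u, ~~ b)] ++ [:: (z, false)] ++ winv [:: (u, ~~ b)].
    by move=> z _; rewrite /winv /= /linv /= negbK.
  have okl : forall z t, z \in Y -> t \notin Y -> adj z t -> wcomm adj [:: (u, ~~ b); (z, false); (u, b)] [:: (t, false)].
    move=> z t hz ht hzt.
    have hst : t \in st adj u.
      by apply: contraNT ht => hn; exact: mem_Y_step hv hz hzt hn.
    rewrite -[[:: _; _; _]]/([:: (u, ~~ b)] ++ [:: (z, false)] ++ [:: (u, b)]).
    have hut : okc adj u t by move: hst; rewrite in_st /okc eq_sym.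
    apply: wcomm_catl; first exact: wcomm_letters.
    apply: wcomm_catl; first by apply: wcomm_letters; rewrite /okc hzt orbT.
    exact: wcomm_letters.
  case: ifP => hx; case: ifP => hy.
  + rewrite (cY _ hx) (cY _ hy); apply: wcomm_conj; exact: re_comm.
  + by apply: okl => //; rewrite hy.
  + by apply: wcomm_sym; apply: okl => //; [rewrite hx|rewrite adj_sym].
  + exact: re_comm.
Qed.

Lemma fvalid_cat (s t : fword V) : fvalid adj (s ++ t) <-> fvalid adj s /\ fvalid adj t.
Proof.
elim: s => [|p s IH] /=; first by split=> [h|[]].
move: IH; tauto.
Qed.

Lemma fvalid_finv (s : fword V) : fvalid adj s -> fvalid adj (finv s).
Proof.
elim: s => [|p s IH] //= [hp hs].
rewrite /finv /= rev_cons -cats1; apply/fvalid_cat; split; first exact: IH.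
by [].
Qed.

Lemma finv_cons (p : gen V * bool) s : finv (p :: s) = finv s ++ [:: (p.1, ~~ p.2)].
Proof. by rewrite /finv /= rev_cons -cats1. Qed.

Lemma finv_cat (s t : fword V) : finv (s ++ t) = finv t ++ finv s.
Proof. by rewrite /finv map_cat rev_cat. Qed.

Lemma finvK : involutive (@finv V).
Proof.
move=> s; rewrite /finv map_rev revK -map_comp.
by rewrite -[RHS]map_id; apply: eq_map => -[p b] /=; rewrite negbK.
Qed.

Lemma hom_feval (s : fword V) : fvalid adj s -> hom adj (feval s).
Proof.
elim: s => [|p s IH] /= ; first by move=> _; exact: hom_gid.
case=> hp hs; apply: hom_comp; [exact: hom_gen|exact: IH].
Qed.

Lemma fequiv_catl r s t : fvalid adj r -> fequiv s t -> fequiv (r ++ s) (r ++ t).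
Proof.
move=> hr h x; rewrite !feval_cat; apply: subst_req => //; exact: hom_feval.
Qed.

Lemma fequiv_catr r s t : fequiv s t -> fequiv (s ++ r) (t ++ r).
Proof. by move=> h x; rewrite !feval_cat; apply: subst_req_map. Qed.

Lemma gen_inv (p : gen V) b x : gen_valid adj p ->
  req (subst (gen_map p b) (gen_map p (~~ b) x)) [:: (x, false)].
Proof.
case: p => [v w|u Y] /= hv.
- case: hv => hvw _.
  case: (eqVneq x v) => [->|nx].
    rewrite /subst /= eqxx.
    have -> : (w == v) = false by apply/negbTE; rewrite eq_sym.
    rewrite cats0; apply: (req_via (M := [:: (v, false)] ++ [::])); last exact: req_refl.
    by case: b => /=; apply: (req_catl [:: (v,false)]); apply: re_free.
  by rewrite /subst /= (negbTE nx) /= ?(negbTE nx) ?cats0; apply: req_refl.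
- have huY : u \notin Y.
    by apply/negP => /(mem_Y_notin_st hv); rewrite in_st eqxx.
  case: ifP => hx.
    rewrite /subst /= negbK (negbTE huY) hx /=.
    case: b => /=.
      apply: (req_via (M := [::] ++ [:: (x, false)] ++ [::])); last exact: req_refl.
      change (req ([:: (u, true); (u, ~~ true)] ++ [:: (x, false)] ++ [:: (u, true); (u, ~~ true)]) ([::] ++ [:: (x, false)] ++ [::])).
      apply: re_cat; first exact: re_free.
      apply: (req_catl [:: (x, false)]); exact: (re_free adj u true).
    apply: (req_via (M := [::] ++ [:: (x, false)] ++ [::])); last exact: req_refl.
    change (req ([:: (u, false); (u, ~~ false)] ++ [:: (x, false)] ++ [:: (u, false); (u, ~~ false)]) ([::] ++ [:: (x, false)] ++ [::])).
    apply: re_cat; first exact: (re_free adj u false).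
    apply: (req_catl [:: (x, false)]); exact: (re_free adj u false).
  by rewrite /subst /= hx /=; apply: req_refl.
Qed.


Lemma feval1 (p : gen V * bool) x : feval [:: p] x = gen_map p.1 p.2 x.
Proof. by rewrite feval_cons /= subst_letter. Qed.

Lemma feval_nil x : feval ([::] : fword V) x = [:: (x, false)].
Proof. by []. Qed.

Lemma fequiv_pair (g : gen V) b : gen_valid adj g -> fequiv [:: (g, ~~ b); (g, b)] [::].
Proof.
move=> hg x; rewrite feval_cons feval1 /=.
by have := gen_inv (~~ b) x hg; rewrite negbK.
Qed.

Lemma finv_l (s : fword V) : fvalid adj s -> fequiv (finv s ++ s) [::].
Proof.
elim: s => [|[g b] s IH] /=; first by move=> _; apply: fequiv_refl.
case=> hg hs; rewrite finv_cons -catA /=.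
apply: (fequiv_trans (t := finv s ++ s)); last exact: IH.
apply: fequiv_catl; first exact: fvalid_finv.
rewrite -[[:: _, _ & s]]/([:: (g, ~~ b); (g, b)] ++ s) -[X in fequiv _ X]/([::] ++ s).
by apply: fequiv_catr; apply: fequiv_pair.
Qed.

Lemma finv_r (s : fword V) : fvalid adj s -> fequiv (s ++ finv s) [::].
Proof.
move=> hs; have := finv_l (fvalid_finv hs); by rewrite finvK.
Qed.

Lemma fequiv_finv (s t : fword V) : fvalid adj s -> fvalid adj t -> fequiv s t ->
  fequiv (finv s) (finv t).
Proof.
move=> hs ht h.
apply: (fequiv_trans (t := finv s ++ t ++ finv t)).
  apply: fequiv_sym; rewrite -[X in fequiv _ X]cats0; apply: fequiv_catl.
    exact: fvalid_finv.
  exact: finv_r.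
apply: (fequiv_trans (t := (finv s ++ s) ++ finv t)).
  rewrite -catA; apply: fequiv_catl; first exact: fvalid_finv.
  apply: fequiv_catr; exact: fequiv_sym.
rewrite -[X in fequiv _ X]/([::] ++ finv t); apply: fequiv_catr; exact: finv_l.
Qed.

End Fwords.

Section Expsum.
Variables (V : finType) (adj : rel V).
Hypothesis adj_sym : symmetric adj.
Hypothesis adj_irr : irreflexive adj.
Local Notation req := (raag_eq adj).
Import GRing.Theory.
Local Open Scope ring_scope.

Lemma expsum_nil (y : V) : expsum y [::] = 0.
Proof. by rewrite /expsum big_nil. Qed.

Lemma expsum_cons (y : V) (l : letter V) u :
  expsum y (l :: u) = (if l.1 == y then (if l.2 then -1 else 1) else 0) + expsum y u.
Proof. by rewrite /expsum big_cons; case: ifP => _ //; rewrite add0r. Qed.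

Lemma expsum_cat (y : V) u w : expsum y (u ++ w) = expsum y u + expsum y w.
Proof. by rewrite /expsum big_cat. Qed.

Lemma expsum_winv (y : V) u : expsum y (winv u) = - expsum y u.
Proof.
elim: u => [|l u IH]; first by rewrite /winv /= expsum_nil oppr0.
rewrite winv_cons expsum_cat IH expsum_cons expsum_cons expsum_nil /linv /=.
by case: ifP => _; case: (l.2) => /=; ring.
Qed.

Lemma expsum_req (y : V) u w : req u w -> expsum y u = expsum y w.
Proof.
elim=> {u w} [u|u u' _ IH|u u' u'' _ IH1 _ IH2|u u' w w' _ IH1 _ IH2|x b|x y' b c hxy].
- by [].
- by [].
- by rewrite IH1.
- by rewrite !expsum_cat IH1 IH2.
- rewrite !expsum_cons expsum_nil /=; case: ifP => _; last by rewrite !addr0.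
  by case: b => /=; rewrite addr0 ?subrr // addrC subrr.
- by rewrite !expsum_cons expsum_nil /= !addr0 addrC.
Qed.

Lemma expsum_subst (f : gmap V) (y : V) u :
  expsum y (subst f u) = \sum_(z : V) expsum z u * expsum y (f z).
Proof.
elim: u => [|[x b] u IH].
  by rewrite subst_nil expsum_nil; apply/esym/big1 => z _; rewrite expsum_nil mul0r.
rewrite subst_cons expsum_cat IH; apply/esym.
under eq_bigr => z _ do rewrite expsum_cons mulrDl.
rewrite big_split /=; congr (_ + _).
rewrite (bigD1 x) //= eqxx big1 ?addr0; last first.
  by move=> z /negbTE hz; rewrite eq_sym hz mul0r.
by rewrite /Fl /=; case: b; rewrite ?expsum_winv ?mulN1r ?mul1r.
Qed.

Definition E (s : fword V) (x y : V) : int := expsum y (feval s x).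

Lemma E_cat s t x y : E (s ++ t) x y = \sum_(z : V) E t x z * E s z y.
Proof. by rewrite /E feval_cat expsum_subst. Qed.

Lemma E_nil x y : E [::] x y = (x == y)%:Z.
Proof. by rewrite /E /= expsum_cons expsum_nil addr0 /=; case: eqP. Qed.

Lemma E_fequiv s t x y : fequiv adj s t -> E s x y = E t x y.
Proof. by move=> h; rewrite /E; apply: expsum_req. Qed.

Definition cong (m : nat) (a b : int) := (m%:Z %| a - b)%Z.

Lemma cong_mod m a b : (a = b %[mod m%:Z])%Z <-> cong m a b.
Proof. by rewrite /cong -eqz_mod_dvd; split => [->|/eqP]. Qed.

Lemma cong_sum_left m (A B : V -> V -> int) x y :
  (forall z, cong m (A x z) (x == z)%:Z) ->
  cong m (\sum_(z : V) A x z * B z y) (B x y).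
Proof.
move=> hA; rewrite /cong.
have -> : B x y = \sum_(z : V) (x == z)%:Z * B z y.
  rewrite (bigD1 x) //= eqxx mul1r big1 ?addr0 //.
  by move=> z /negbTE hz; rewrite eq_sym hz mul0r.
rewrite -sumrB; apply: rpred_sum => z _; rewrite -mulrBl.
by rewrite mulrC; apply: dvdz_mull; apply: hA.
Qed.

Lemma cong_trans m a b c : cong m a b -> cong m b c -> cong m a c.
Proof.
rewrite /cong => h1 h2; have -> : a - c = (a - b) + (b - c) by rewrite addrA subrK.
exact: rpredD.
Qed.

Lemma cong_sym m a b : cong m a b -> cong m b a.
Proof. by rewrite /cong => h; rewrite -opprB rpredN. Qed.

Lemma cong_refl m a : cong m a a.
Proof. by rewrite /cong subrr; apply: rpred0. Qed.

Lemma cong_sum_right m (A B : V -> V -> int) x y :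
  (forall z, cong m (B z y) (z == y)%:Z) ->
  cong m (\sum_(z : V) A x z * B z y) (A x y).
Proof.
move=> hB; rewrite /cong.
have -> : A x y = \sum_(z : V) A x z * (z == y)%:Z.
  rewrite (bigD1 y) //= eqxx mulr1 big1 ?addr0 //.
  by move=> z /negbTE hz; rewrite hz mulr0.
rewrite -sumrB; apply: rpred_sum => z _; rewrite -mulrBr.
by apply: dvdz_mull; apply: hB.
Qed.

End Expsum.

Section Closure.
Variables (V : finType) (adj : rel V).
Hypothesis adj_sym : symmetric adj.
Hypothesis adj_irr : irreflexive adj.
Variable m : nat.
Import GRing.Theory.
Local Open Scope ring_scope.

Local Notation Q := (in_SIA adj m).
Local Notation P := (in_SIA' adj m).
Local Notation fequiv := (fequiv adj).

Lemma Q_valid s : Q s -> fvalid adj s. Proof. by case. Qed.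

Lemma Q_E s x y : Q s -> cong m (E s x y) (x == y)%:Z.
Proof. by case=> _ h; apply/cong_mod; exact: h. Qed.

Lemma Q_intro s : fvalid adj s -> (forall x y, cong m (E s x y) (x == y)%:Z) -> Q s.
Proof. by move=> hv h; split=> // x y; apply/cong_mod; exact: h. Qed.

Lemma Q_nil : Q [::].
Proof. by apply: Q_intro => // x y; rewrite E_nil; apply: cong_refl. Qed.

Lemma Q_cat s t : Q s -> Q t -> Q (s ++ t).
Proof.
move=> hs ht; apply: Q_intro; first by apply/fvalid_cat; split; apply: Q_valid.
move=> x y; rewrite E_cat; apply: cong_trans (Q_E x y hs).
by apply: cong_sum_left => z; apply: Q_E.
Qed.

Lemma Q_finv s : Q s -> Q (finv s).
Proof.
move=> hs; apply: Q_intro; first by apply: fvalid_finv; apply: Q_valid.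
move=> x y.
have h1 := @cong_sum_left _ m (E s) (E (finv s)) x y (fun z => Q_E x z hs).
rewrite -E_cat (E_fequiv x y (finv_l adj_sym adj_irr (Q_valid hs))) E_nil in h1.
exact: cong_sym h1.
Qed.

Definition allQ (cs : seq (fword V * fword V)) :=
  foldr (fun c P => (Q c.1 /\ Q c.2) /\ P) True cs.
Definition cprod (cs : seq (fword V * fword V)) :=
  flatten (map (fun c => fcomm c.1 c.2) cs).

Lemma allQ_cat cs ds : allQ cs -> allQ ds -> allQ (cs ++ ds).
Proof. by elim: cs => [|c cs IH] //= [h1 h2] h3; split => //; apply: IH. Qed.

Lemma cprod_cat cs ds : cprod (cs ++ ds) = cprod cs ++ cprod ds.
Proof. by rewrite /cprod map_cat flatten_cat. Qed.

Lemma Q_fcomm a b : Q a -> Q b -> Q (fcomm a b).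
Proof.
move=> ha hb; rewrite /fcomm.
by apply: Q_cat; [apply: Q_finv|apply: Q_cat; [apply: Q_finv|apply: Q_cat]].
Qed.

Lemma Q_cprod cs : allQ cs -> Q (cprod cs).
Proof.
elim: cs => [|c cs IH] /=; first by move=> _; exact: Q_nil.
by case=> [[h1 h2] h3]; apply: Q_cat; [apply: Q_fcomm|apply: IH].
Qed.

Lemma P_def s : P s <-> exists2 cs, allQ cs & fequiv s (cprod cs).
Proof. by split=> [[cs [h1 h2]]|[cs h1 h2]]; exists cs. Qed.

Lemma P_nil : P [::].
Proof. by apply/P_def; exists [::] => //; apply: fequiv_refl. Qed.

Lemma P_fequiv s t : P s -> fequiv s t -> P t.
Proof.
case/P_def=> cs h1 h2 h3; apply/P_def; exists cs => //.
apply: fequiv_trans h2; exact: fequiv_sym.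
Qed.

Lemma P_cat s t : P s -> P t -> P (s ++ t).
Proof.
case/P_def=> cs h1 h2; case/P_def=> ds h3 h4; apply/P_def; exists (cs ++ ds).
  exact: allQ_cat.
rewrite cprod_cat; apply: (fequiv_trans (t := cprod cs ++ t)).
  exact: fequiv_catr.
apply: fequiv_catl => //; apply: Q_valid; exact: Q_cprod.
Qed.

Lemma P_comm a b : Q a -> Q b -> P (fcomm a b).
Proof.
move=> ha hb; apply/P_def; exists [:: (a, b)] => //.
by rewrite /cprod /= cats0; apply: fequiv_refl.
Qed.

Lemma finv_fcomm (a b : fword V) : finv (fcomm a b) = fcomm b a.
Proof. by rewrite /fcomm !finv_cat !finvK !catA. Qed.

Lemma P_finv s : fvalid adj s -> P s -> P (finv s).
Proof.
move=> hs /P_def [cs h1 h2]; apply/P_def.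
exists (rev (map (fun c => (c.2, c.1)) cs)).
  elim: cs h1 {h2} => [|c cs IH] //= [h1 h2].
  rewrite rev_cons -cats1; apply: allQ_cat; first exact: IH.
  by case: h1.
have -> : cprod (rev (map (fun c => (c.2, c.1)) cs)) = finv (cprod cs).
  elim: cs {h1 h2} => [|c cs IH] //=.
  by rewrite rev_cons -cats1 cprod_cat IH /cprod /= cats0 finv_cat finv_fcomm.
apply: fequiv_finv => //; apply: Q_valid; apply: Q_cprod; exact: h1.
Qed.

Lemma fequiv_cancel X g Y : fvalid adj X -> fvalid adj g ->
  fequiv (X ++ finv g ++ g ++ Y) (X ++ Y).
Proof.
move=> hX hg; apply: fequiv_catl => //; rewrite catA.
rewrite -[X in fequiv _ X]/([::] ++ Y); apply: fequiv_catr => //; exact: (finv_l adj_sym adj_irr hg).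
Qed.

Lemma fequiv_cancel' X g Y : fvalid adj X -> fvalid adj g ->
  fequiv (X ++ g ++ finv g ++ Y) (X ++ Y).
Proof.
move=> hX hg; have := fequiv_cancel Y hX (fvalid_finv hg); by rewrite finvK.
Qed.

Lemma conj_fcomm g a b : fvalid adj g -> fvalid adj a -> fvalid adj b ->
  fequiv (g ++ fcomm a b ++ finv g)
         (fcomm (g ++ a ++ finv g) (g ++ b ++ finv g)).
Proof.
move=> hg ha hb; apply: fequiv_sym.
rewrite /fcomm !finv_cat !finvK.
have vg' := fvalid_finv hg; have va' := fvalid_finv ha; have vb' := fvalid_finv hb.
rewrite -!catA.
rewrite [g ++ (finv a ++ _)]catA.
apply: fequiv_trans; first by apply: fequiv_cancel => //; apply/fvalid_cat.
rewrite -!catA [g ++ (finv a ++ _)]catA [(g ++ finv a) ++ _]catA.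
apply: fequiv_trans; first by apply: fequiv_cancel => //; apply/fvalid_cat; split => //; apply/fvalid_cat.
rewrite -!catA [g ++ (finv a ++ _)]catA [(g ++ finv a) ++ _]catA [(_ ++ finv b) ++ _]catA.
apply: fequiv_trans; first by apply: fequiv_cancel => //; apply/fvalid_cat; split => //; apply/fvalid_cat; split => //; apply/fvalid_cat.
rewrite -!catA; exact: fequiv_refl.
Qed.

Lemma P_conj g s : Q g -> fvalid adj s -> P s -> P (g ++ s ++ finv g).
Proof.
move=> hg hs /P_def [cs h1 h2].
have vg := Q_valid hg.
apply/P_def; exists (map (fun c => (g ++ c.1 ++ finv g, g ++ c.2 ++ finv g)) cs).
  elim: cs {h2} h1 => [|c cs IH] //= [[q1 q2] h].
  by split; [split; (apply: Q_cat => //; apply: Q_cat => //; apply: Q_finv)|apply: IH].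
apply: (fequiv_trans (t := g ++ cprod cs ++ finv g)).
  by apply: fequiv_catl => //; apply: fequiv_catr.
elim: cs {h2} h1 => [|c cs IH] /=.
  by move=> _; rewrite /cprod /=; apply: finv_r.
case=> [[q1 q2] h].
rewrite /cprod /= -/(cprod cs) -/(cprod _).
apply: (fequiv_trans (t := (g ++ fcomm c.1 c.2 ++ finv g) ++ g ++ cprod cs ++ finv g)).
  rewrite -!catA; apply: fequiv_sym.
  have hv : fvalid adj (g ++ fcomm c.1 c.2).
    by apply/fvalid_cat; split => //; apply: Q_valid; apply: Q_fcomm.
  by have := fequiv_cancel (cprod cs ++ finv g) hv vg; rewrite /fcomm -!catA.
apply: (fequiv_trans (t := fcomm (g ++ c.1 ++ finv g) (g ++ c.2 ++ finv g) ++ g ++ cprod cs ++ finv g)).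
  apply: fequiv_catr => //; apply: conj_fcomm => //; exact: Q_valid.
apply: fequiv_catl => //; last exact: IH.
apply: Q_valid; apply: Q_fcomm; (apply: Q_cat => //; apply: Q_cat => //; apply: Q_finv); exact: hg.
Qed.

Definition pow (s : fword V) n := flatten (nseq n s).

Lemma pow_S s n : pow s n.+1 = s ++ pow s n. Proof. by []. Qed.

Lemma Q_pow s n : Q s -> Q (pow s n).
Proof. by move=> hs; elim: n => [|n IH]; [exact: Q_nil|rewrite pow_S; apply: Q_cat]. Qed.

Lemma abstract_main (C X K : fword V) n : Q C -> Q X -> P K -> fvalid adj K ->
  fequiv (pow (C ++ X) n) (pow C n ++ K) -> P (pow X n).
Proof.
move=> hC hX hK vK hE.
have vC := Q_valid hC; have vX := Q_valid hX.
have vCX : fvalid adj (C ++ X) by apply/fvalid_cat.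
have QCX : Q (C ++ X) by apply: Q_cat.
pose D k := finv (pow C k) ++ pow (C ++ X) k ++ finv (pow X k).
have vD : forall k, fvalid adj (D k).
  move=> k; apply/fvalid_cat; split; first by apply: fvalid_finv; apply: Q_valid; apply: Q_pow.
  apply/fvalid_cat; split; first by apply: Q_valid; apply: Q_pow.
  by apply: fvalid_finv; apply: Q_valid; apply: Q_pow.
have PD : forall k, P (D k).
  elim=> [|k IH]; first exact: P_nil.
  have vCk := Q_valid (Q_pow k hC); have vXk := Q_valid (Q_pow k hX).
  have vCXk := Q_valid (Q_pow k QCX).
  have vCk' := fvalid_finv vCk; have vX' := fvalid_finv vX.
  have h1 : fequiv (D k.+1) (finv (pow C k) ++ X ++ pow (C ++ X) k ++ finv (pow X k) ++ finv X).
    rewrite /D !pow_S !finv_cat -!catA.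
    by apply: fequiv_cancel.
  have h2 : fequiv (fcomm (pow C k) (finv X) ++ (X ++ D k ++ finv X))
                   (finv (pow C k) ++ X ++ pow (C ++ X) k ++ finv (pow X k) ++ finv X).
    rewrite /fcomm /D finvK -!catA.
    have e : forall (A B Cc : fword V), A ++ X ++ B ++ finv X ++ X ++ Cc = (A ++ X ++ B) ++ finv X ++ X ++ Cc.
      by move=> *; rewrite -!catA.
    rewrite e.
    apply: fequiv_trans; first apply: fequiv_cancel => //.
      by apply/fvalid_cat; split => //; apply/fvalid_cat.
    rewrite -!catA.
    have e2 : forall (A B Cc : fword V), A ++ X ++ B ++ finv B ++ Cc = (A ++ X) ++ B ++ finv B ++ Cc.
      by move=> *; rewrite -!catA.
    rewrite e2.
    apply: fequiv_trans; first apply: fequiv_cancel' => //.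
      by apply/fvalid_cat.
    rewrite -!catA; exact: fequiv_refl.
  apply: P_fequiv (fequiv_trans h2 (fequiv_sym h1)).
  apply: P_cat; first by apply: P_comm; [apply: Q_pow|apply: Q_finv].
  exact: P_conj.
have h3 : fequiv (D n) (K ++ finv (pow X n)).
  rewrite /D.
  apply: (fequiv_trans (t := finv (pow C n) ++ (pow C n ++ K) ++ finv (pow X n))).
    apply: fequiv_catl => //; first by apply: fvalid_finv; apply: Q_valid; apply: Q_pow.
    by apply: fequiv_catr.
  rewrite -catA.
  have := fequiv_cancel (K ++ finv (pow X n)) (I : fvalid adj [::]) (Q_valid (Q_pow n hC)).
  by [].
have h4 : P (K ++ finv (pow X n)) by apply: P_fequiv (PD n) h3.
have h5 : P (finv K ++ K ++ finv (pow X n)) by apply: P_cat => //; apply: P_finv.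
have h6 : P (finv (pow X n)).
  exact: (P_fequiv h5 (fequiv_cancel (finv (pow X n)) (I : fvalid adj [::]) vK)).
have := P_finv (fvalid_finv (Q_valid (Q_pow n hX))) h6; by rewrite finvK.
Qed.

End Closure.

Section Helpers.
Variables (V : finType) (adj : rel V).
Local Notation req := (raag_eq adj).

Lemma nseq_rcons (T : Type) k (a : T) : nseq k a ++ [:: a] = nseq k.+1 a.
Proof. by elim: k => [|k IH] //=; rewrite IH. Qed.

Lemma flatten_nseqS (T : Type) k (s : seq T) : flatten (nseq k.+1 s) = flatten (nseq k s) ++ s.
Proof.
elim: k => [|k IH]; first by rewrite /= cats0.
change (s ++ flatten (nseq k.+1 s) = flatten (nseq k.+1 s) ++ s); by rewrite {1}IH catA.
Qed.

Lemma flatten_nseq_nseq (T : Type) k j (a : T) : flatten (nseq k (nseq j a)) = nseq (k * j) a.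
Proof. by elim: k => [|k IH] //=; rewrite IH mulSn nseqD. Qed.

Lemma winv_nseq (c : V) b k : winv (nseq k (c, b)) = nseq k (c, ~~ b).
Proof. by rewrite /winv map_nseq rev_nseq. Qed.

Lemma finv_nseq (g : gen V) b k : finv (nseq k (g, b)) = nseq k (g, ~~ b).
Proof. by rewrite /finv map_nseq rev_nseq. Qed.

Lemma subst_nseq (f : gmap V) c b k : subst f (nseq k (c, b)) = flatten (nseq k (Fl f (c, b))).
Proof. by elim: k => [|k IH] //=; rewrite subst_cons IH. Qed.

Lemma subst_flatten_nseq (f : gmap V) k p : subst f (flatten (nseq k p)) = flatten (nseq k (subst f p)).
Proof. by elim: k => [|k IH] //=; rewrite subst_cat IH. Qed.

Lemma subst_fixed (f : gmap V) (p : word V) : all (fun l : letter V => f l.1 == [:: (l.1, false)]) p -> subst f p = p.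
Proof.
elim: p => [|[c b] p IH] //= /andP [/eqP h1 h2]; rewrite subst_cons IH // /Fl /= h1.
by case: b.
Qed.

Lemma all_nseq (T : Type) (P : pred T) k a : P a -> all P (nseq k a).
Proof. by move=> h; elim: k => //= k ->; rewrite h. Qed.

Lemma req_flatten_nseq k p p' : req p p' -> req (flatten (nseq k p)) (flatten (nseq k p')).
Proof. by move=> h; elim: k => [|k IH] /=; [exact: req_refl|apply: re_cat]. Qed.

Lemma W2 k (c q : word V) : req (flatten (nseq k (c ++ q ++ winv c))) (c ++ flatten (nseq k q) ++ winv c).
Proof.
elim: k => [|k IH].
  by apply: req_sym; apply: req_invr.
change (req ((c ++ q ++ winv c) ++ flatten (nseq k (c ++ q ++ winv c))) (c ++ (q ++ flatten (nseq k q)) ++ winv c)).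
apply: (req_via (M := c ++ q ++ winv c ++ c ++ flatten (nseq k q) ++ winv c)).
  by rewrite -!catA; apply: req_catl; apply: req_catl; apply: req_catl; exact: IH.
have := req_cancel' adj (c ++ q) c (flatten (nseq k q) ++ winv c).
by rewrite -!catA.
Qed.

Lemma wcomm_nseqr p k q : wcomm adj p q -> wcomm adj p (flatten (nseq k q)).
Proof.
move=> h; elim: k => [|k IH] /=; first by rewrite /wcomm cats0; exact: req_refl.
exact: wcomm_catr.
Qed.

Lemma W3 k (p q : word V) : wcomm adj q p ->
  req (flatten (nseq k (p ++ q))) (flatten (nseq k p) ++ flatten (nseq k q)).
Proof.
move=> h; elim: k => [|k IH] /=; first exact: req_refl.
apply: (req_via (M := p ++ q ++ flatten (nseq k p) ++ flatten (nseq k q))).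
  by rewrite -catA; apply: req_catl; apply: req_catl.
rewrite -catA; apply: req_catl; rewrite !catA; apply: req_catr.
exact: wcomm_nseqr.
Qed.

End Helpers.

Section Concrete.
Variables (V : finType) (adj : rel V).
Hypothesis adj_sym : symmetric adj.
Hypothesis adj_irr : irreflexive adj.
Local Notation req := (raag_eq adj).

Lemma feval_Trpow (a c : V) b k x : a != c ->
  feval (nseq k (Tr a c, b)) x = if x == a then (a, false) :: nseq k (c, b) else [:: (x, false)].
Proof.
move=> hac; elim: k => [|k IH]; first by rewrite /=; case: eqP => // ->.
rewrite feval_cons IH /=.
case: ifP => [_|nx].
  rewrite subst_cons subst_fixed /Fl /= ?eqxx //.
  by apply: all_nseq => /=; rewrite ifN // eq_sym.
by rewrite subst_letter nx.
Qed.

Lemma subst_Trpow_fixed (a c : V) b k p : a != c -> all (fun l : letter V => l.1 != a) p ->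
  subst (feval (nseq k (Tr a c, b))) p = p.
Proof.
move=> hac hp; apply: subst_fixed; apply: sub_all hp => l /= hl.
by rewrite feval_Trpow // (negbTE hl).
Qed.

Variables (m : nat) (v u w : V).
Hypotheses (huv : u != v) (huw : u != w) (hvw : v != w).

Definition un k := nseq k (u, false).
Definition ui k := nseq k (u, true).
Definition yy := nseq m (w, false).
Definition AA := nseq m (Tr v u, false).
Definition BB := nseq m (Tr u w, true).
Definition KK := fcomm AA BB.

Lemma hvu : v != u. Proof. by rewrite eq_sym. Qed.
Lemma hwv : w != v. Proof. by rewrite eq_sym. Qed.
Lemma hwu : w != u. Proof. by rewrite eq_sym. Qed.

Lemma KK_eq : KK = nseq m (Tr v u, true) ++ nseq m (Tr u w, false) ++ AA ++ BB.
Proof. by rewrite /KK /fcomm !finv_nseq. Qed.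

Lemma KK_v : feval KK v = (v, false) :: ui m ++ flatten (nseq m ((u, false) :: yy)).
Proof.
rewrite KK_eq !feval_cat feval_Trpow ?hvu // ifN ?hvu //.
rewrite subst_letter feval_Trpow ?hvu // eqxx.
rewrite subst_cons subst_nseq /Fl /= !feval_Trpow ?hvu ?hwu // ifN ?hvu // eqxx.
rewrite subst_cat subst_letter feval_Trpow ?hvu // eqxx.
rewrite subst_flatten_nseq subst_Trpow_fixed ?hvu //=.
by rewrite eq_sym hvu; apply: all_nseq; rewrite /= hwv.
Qed.

Lemma KK_u : feval KK u = (u, false) :: yy ++ nseq m (w, true).
Proof.
rewrite KK_eq /AA /BB !feval_cat feval_Trpow ?huw // eqxx.
have allw : forall b, all (fun l : letter V => l.1 != v) ((u,false) :: nseq m (w,b)).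
  by move=> b; rewrite /= huv; apply: all_nseq; rewrite /= hwv.
have h1 := subst_Trpow_fixed false m hvu (allw true).
have h2 : subst (feval (nseq m (Tr u w, false))) ((u,false) :: nseq m (w,true)) =
          (u, false) :: yy ++ nseq m (w, true).
  rewrite subst_cons subst_Trpow_fixed ?huw //; last by apply: all_nseq; rewrite /= hwu.
  by rewrite /Fl /= feval_Trpow ?huw // eqxx.
have h3 : subst (feval (nseq m (Tr v u, true))) ((u, false) :: yy ++ nseq m (w, true)) =
          (u, false) :: yy ++ nseq m (w, true).
  apply: subst_Trpow_fixed; first exact: hvu.
  by rewrite /yy /= huv all_cat !all_nseq //= hwv.
by rewrite h1 h2 h3.
Qed.

Lemma KK_x x : x != v -> x != u -> feval KK x = [:: (x, false)].
Proof.
move=> hxv hxu.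
rewrite KK_eq !feval_cat feval_Trpow ?huw // ifN //.
rewrite !subst_Trpow_fixed ?hvu ?huw //= ?hxv ?hxu //.
Qed.

End Concrete.

Section NonAdj.
Variables (V : finType) (adj : rel V).
Hypothesis adj_sym : symmetric adj.
Hypothesis adj_irr : irreflexive adj.
Local Notation req := (raag_eq adj).
Variables (m : nat) (v u w : V).
Hypotheses (huv : u != v) (huw : u != w) (hvw : v != w).
Variable Y : {set V}.
Hypotheses (hY : is_component adj u Y) (hvY : v \notin Y) (hwY : w \in Y).

Lemma huY : u \notin Y.
Proof. by apply/negP => /(mem_Y_notin_st hY); rewrite in_st eqxx. Qed.

Definition CC : fword V := [:: (PC u Y, true)].
Definition XX : fword V := nseq m (Tr v w, false).

Lemma feval_CC x : feval CC x = if x \in Y then [:: (u, false); (x, false); (u, true)] else [:: (x, false)].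
Proof. by rewrite feval1. Qed.

Lemma pow_S' (s : fword V) n : pow s n.+1 = pow s n ++ s.
Proof. exact: flatten_nseqS. Qed.

Lemma fvalid_pow (s : fword V) n : fvalid adj s -> fvalid adj (pow s n).
Proof. by move=> hs; elim: n => [|n IH] //=; apply/fvalid_cat. Qed.

Lemma Lfix (Z : fword V) n x : x \notin Y -> feval Z x = [:: (x, false)] ->
  feval (pow (CC ++ Z) n) x = [:: (x, false)].
Proof.
move=> hx hZ; elim: n => [|n IH] //.
rewrite pow_S' feval_cat feval_cat hZ subst_letter feval_CC (negbTE hx).
by rewrite subst_letter IH.
Qed.

Lemma LY (Z : fword V) n x : (forall z, z \in Y -> feval Z z = [:: (z, false)]) ->
  feval Z u = [:: (u, false)] -> x \in Y ->
  feval (pow (CC ++ Z) n) x = un u n ++ (x, false) :: ui u n.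
Proof.
move=> hZ hZu hx; elim: n => [|n IH]; first by [].
have hu := Lfix n huY hZu.
rewrite pow_S' feval_cat feval_cat hZ // subst_letter feval_CC hx.
rewrite !subst_cons subst_nil /Fl /= hu IH.
by rewrite /winv /= -catA /= /ui nseq_rcons.
Qed.

Lemma XX_fix x : x != v -> feval XX x = [:: (x, false)].
Proof. by move=> hx; rewrite /XX feval_Trpow // (negbTE hx). Qed.

Lemma XX_Y z : z \in Y -> feval XX z = [:: (z, false)].
Proof. by move=> hz; apply: XX_fix; apply: contraNneq hvY => <-. Qed.

Lemma XX_u : feval XX u = [:: (u, false)].
Proof. exact: XX_fix. Qed.

Lemma LV n : req (feval (pow (CC ++ XX) n) v) ((v, false) :: flatten (nseq n ((u, false) :: yy m w)) ++ ui u n).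
Proof.
elim: n => [|n IH]; first exact: req_refl.
have hu := Lfix n huY XX_u.
have hv : feval (CC ++ XX) v = (v, false) :: flatten (nseq m [:: (u, false); (w, false); (u, true)]).
  rewrite feval_cat /XX feval_Trpow // eqxx subst_cons subst_nseq /Fl /= /gid /= !subst_letter (negbTE hvY) hwY.
  by [].
set R := flatten (nseq m (un u n.+1 ++ [:: (w, false)] ++ winv (un u n.+1))).
have hL : feval (pow (CC ++ XX) n.+1) v = feval (pow (CC ++ XX) n) v ++ R.
  rewrite pow_S' feval_cat hv subst_cons subst_flatten_nseq; congr (_ ++ _).
  rewrite /R; congr (flatten (nseq m _)).
  rewrite !subst_cons subst_nil /Fl /= hu (LY _ XX_Y XX_u hwY).
  rewrite -[(u, false) :: un u n]/(un u n.+1) /un winv_nseq /= -catA /= nseq_rcons. by [].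
rewrite hL.
have hR : req R (un u n.+1 ++ yy m w ++ ui u n.+1).
  have := W2 adj m (un u n.+1) [:: (w, false)].
  rewrite -[[:: (w, false)]]/(nseq 1 (w, false)) flatten_nseq_nseq muln1 /un winv_nseq.
  by rewrite /R /un winv_nseq; apply.
apply: (req_via (M := ((v, false) :: flatten (nseq n ((u, false) :: yy m w)) ++ ui u n) ++ R)).
  exact: req_catr.
apply: (req_via (M := ((v, false) :: flatten (nseq n ((u, false) :: yy m w)) ++ ui u n) ++ (un u n.+1 ++ yy m w ++ ui u n.+1))).
  exact: req_catl.
rewrite flatten_nseqS -/(un u n) -/(ui u n).
have e : un u n.+1 = un u n ++ [:: (u, false)] by rewrite /un nseq_rcons.
rewrite e.
have := req_cancel' adj ((v, false) :: flatten (nseq n ((u, false) :: yy m w))) (un u n) ([:: (u, false)] ++ yy m w ++ ui u n.+1).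
by rewrite /un winv_nseq /= -!catA.
Qed.

Lemma pow_CC_nil n : pow CC n = pow (CC ++ [::]) n. Proof. by []. Qed.

Lemma CC_valid : fvalid adj CC. Proof. by split. Qed.

Lemma nonadj_eq : fequiv adj (pow (CC ++ XX) m) (pow CC m ++ KK m v u w).
Proof.
have hom_pC : hom adj (feval (pow CC m)) by apply: hom_feval => //; apply: fvalid_pow; exact: CC_valid.
have nil_fix : forall z, feval ([::] : fword V) z = [:: (z, false)] by [].
have pCY : forall z, z \in Y -> feval (pow CC m) z = un u m ++ (z, false) :: ui u m.
  by move=> z hz; rewrite pow_CC_nil; apply: LY.
have pCfix : forall z, z \notin Y -> feval (pow CC m) z = [:: (z, false)].
  by move=> z hz; rewrite pow_CC_nil; apply: Lfix.
move=> x; rewrite feval_cat.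
case: (eqVneq x v) => [->|xv].
  apply: req_trans (LV m) _.
  rewrite KK_v // subst_cons /Fl /= pCfix // subst_cat.
  rewrite (subst_fixed (p := ui u m)); last by apply: all_nseq; rewrite /= pCfix ?huY.
  rewrite subst_flatten_nseq subst_cons /Fl /= pCfix ?huY // subst_nseq /Fl /= pCY //.
  set F := flatten (nseq m ((u, false) :: yy m w)).
  have i1 : req (flatten (nseq m (un u m ++ (w, false) :: ui u m))) (un u m ++ yy m w ++ ui u m).
    have := W2 adj m (un u m) [:: (w, false)].
    rewrite -[[:: (w, false)]]/(nseq 1 (w, false)) flatten_nseq_nseq muln1 /un winv_nseq.
    by apply.
  have i2 : req (flatten (nseq m ([:: (u, false)] ++ flatten (nseq m (un u m ++ (w, false) :: ui u m)))))
                (un u m ++ F ++ ui u m).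
    apply: (req_via (M := flatten (nseq m (un u m ++ ((u, false) :: yy m w) ++ winv (un u m))))).
      apply: req_flatten_nseq.
      have -> : un u m ++ ((u, false) :: yy m w) ++ winv (un u m) = [:: (u, false)] ++ (un u m ++ yy m w ++ ui u m).
        rewrite /un winv_nseq /= -[(u, false) :: yy m w ++ _]cat1s catA nseq_rcons. by [].
      exact: req_catl.
    have := W2 adj m (un u m) ((u, false) :: yy m w).
    by rewrite /un winv_nseq.
  apply: req_sym.
  apply: (req_via (M := [:: (v, false)] ++ ui u m ++ (un u m ++ F ++ ui u m))).
    by apply: (req_catl [:: (v, false)]); apply: (req_catl (ui u m)); exact: i2.
  have := req_cancel' adj [:: (v, false)] (un u m) (F ++ ui u m).
  by rewrite /un winv_nseq.
case: (eqVneq x u) => [->|xu].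
  rewrite (Lfix _ huY XX_u) KK_u //.
  apply: (req_via (M := subst (feval (pow CC m)) [:: (u, false)])).
    by rewrite subst_letter pCfix ?huY //; apply: req_refl.
  apply: subst_req => //; apply: req_sym.
  rewrite -[[:: (u, false)]]cats0 -cat1s; apply: req_catl.
  by rewrite /yy -(winv_nseq w false); exact: (req_invr adj (nseq m (w, false))).
rewrite KK_x // subst_letter.
case: (boolP (x \in Y)) => xY.
  by rewrite (LY _ XX_Y XX_u xY) pCY //; apply: req_refl.
by rewrite (Lfix _ xY (XX_fix xv)) pCfix //; apply: req_refl.
Qed.

End NonAdj.

Section Final.
Variables (V : finType) (adj : rel V).
Hypothesis adj_sym : symmetric adj.
Hypothesis adj_irr : irreflexive adj.
Local Notation req := (raag_eq adj).
Variable m : nat.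
Import GRing.Theory.
Local Open Scope ring_scope.

Lemma fvalid_nseq (p : gen V * bool) k : gen_valid adj p.1 -> fvalid adj (nseq k p).
Proof. by move=> h; elim: k => //= k IH. Qed.

Lemma expsum_nseq (y c : V) b k :
  expsum y (nseq k (c, b)) = k%:Z * (if c == y then (if b then -1 else 1) else 0).
Proof.
elim: k => [|k IH]; first by rewrite expsum_nil mul0r.
by rewrite /= expsum_cons IH /= -addn1 PoszD mulrDl mul1r addrC.
Qed.

Lemma Q_Trpow (a c : V) b : a != c -> vle adj a c -> in_SIA adj m (nseq m (Tr a c, b)).
Proof.
move=> hac hle; apply: Q_intro; first by apply: fvalid_nseq.
move=> x y; rewrite /E feval_Trpow //.
case: ifP => [/eqP ->|_]; last by rewrite expsum_cons expsum_nil addr0 /=; case: eqP => _; apply: cong_refl.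
rewrite expsum_cons expsum_nseq /=.
idtac.
rewrite /cong addrAC; have -> : (if a == y then 1 else 0) = (a == y)%:Z :> int by case: (a == y).
rewrite subrr add0r; apply: dvdz_mulr; exact: dvdzz.
Qed.

Lemma pow_nil n : pow ([::] : fword V) n = [::].
Proof. by elim: n. Qed.

Variables (v u w : V).
Hypotheses (huv : u != v) (huw : u != w) (hvw : v != w).
Hypotheses (hvu_le : vle adj v u) (huw_le : vle adj u w) (hvw_le : vle adj v w).

Lemma QX : in_SIA adj m (XX m v w). Proof. exact: Q_Trpow. Qed.

Lemma PK : in_SIA' adj m (KK m v u w).
Proof.
have h1 : v != u by rewrite eq_sym.
by apply: P_comm; [exact: (Q_Trpow false h1 hvu_le)|exact: (Q_Trpow true huw huw_le)].
Qed.

Lemma vK : fvalid adj (KK m v u w).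
Proof.
have h1 : v != u by rewrite eq_sym.
apply: (@Q_valid _ _ m); rewrite /KK; apply: Q_fcomm => //; [exact: (Q_Trpow false h1 hvu_le)|exact: (Q_Trpow true huw huw_le)].
Qed.

Lemma pow_XX : pow (XX m v w) m = nseq (m ^ 2) (Tr v w, false).
Proof. by rewrite /pow /XX flatten_nseq_nseq mulnn. Qed.

Lemma adj_case : adj u w -> fequiv adj (pow ([::] ++ XX m v w) m) (pow [::] m ++ KK m v u w).
Proof.
move=> huwa x; rewrite pow_nil /= pow_XX -mulnn.
have e : nseq (m ^ 2) (Tr v w, false) = nseq (m * m) (Tr v w, false) by rewrite mulnn.
case: (eqVneq x v) => [->|xv].
  rewrite feval_Trpow // eqxx KK_v //.
  apply: req_cons.
  have hc : wcomm adj (yy m w) [:: (u, false)].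
    apply: wcomm_sym; have -> : yy m w = flatten (nseq m (nseq 1 (w, false))) by rewrite flatten_nseq_nseq muln1.
    by apply: wcomm_nseqr; apply: wcomm_letters; rewrite /okc huwa orbT.
  have := @W3 V adj m [:: (u, false)] (yy m w) hc.
  rewrite -[[:: (u, false)]]/(nseq 1 (u, false)) flatten_nseq_nseq muln1 /yy flatten_nseq_nseq => h.
  apply: req_sym; apply: (req_via (M := ui u m ++ (un u m ++ nseq (m * m) (w, false)))).
    exact: req_catl.
  have := req_cancel' adj [::] (un u m) (nseq (m * m) (w, false)).
  by rewrite /un winv_nseq.
rewrite feval_Trpow // (negbTE xv).
case: (eqVneq x u) => [->|xu].
  rewrite KK_u //; apply: req_sym.
  rewrite -[[:: (u, false)]]cats0 -cat1s; apply: req_catl.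
  by rewrite /yy -(winv_nseq w false); exact: (req_invr adj (nseq m (w, false))).
by rewrite KK_x //; apply: req_refl.
Qed.

End Final.

Import GRing.Theory.

Theorem lemma3p8 (V : finType) (adj : rel V)
  (adj_sym : symmetric adj) (adj_irr : irreflexive adj)
  (hB2 : B2 adj) (v w : V) (hvw : v != w) (hle : vle adj v w) (m : nat) :
  in_SIA' adj m (nseq (m ^ 2) (Tr v w, false)).
Proof.
have [u [huv huw hvu huw_le]] := hB2 v w hvw hle.
rewrite -pow_XX.
case: (boolP (adj u w)) => hadj.
  apply: (abstract_main adj_sym adj_irr (C := [::])).
  - exact: Q_nil.
  - exact: (QX m hvw hle).
  - exact: (PK m huv huw hvu huw_le).
  - exact: (vK adj_sym adj_irr m huv huw hvu huw_le).
  - exact: (adj_case m huv huw hvw hadj).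
pose Y := [set y | connect (adj_off adj u) w y].
have hwst : w \notin st adj u by rewrite in_st negb_or eq_sym huw.
have hY : is_component adj u Y by exists w.
have hwY : w \in Y by rewrite inE connect0.
have hvY : v \notin Y.
  apply/negP => hv.
  have hvst := mem_Y_notin_st hY hv.
  move: hv; rewrite inE => /connectP [p hp hlast].
  case/lastP: p hp hlast => [|p z] /=; first by move=> _ evw; move: hvw; rewrite evw eqxx.
  rewrite last_rcons rcons_path => /andP [_ he] ez; rewrite -ez in he.
  case/and3P: he => ha hzst _.
  have := subsetP hvu (last w p); rewrite /lk inE adj_sym => /(_ ha).
  by rewrite (negbTE hzst).
apply: (abstract_main adj_sym adj_irr (C := CC u Y)).
- apply: Q_intro; first by split.
  move=> x y; rewrite /E feval_CC; case: ifP => _.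
    rewrite !expsum_cons expsum_nil /=.
    case: (u == y) => /=; rewrite ?addr0 ?add0r.
      by case: (x == y); apply: cong_refl.
    by case: (x == y) => /=; apply: cong_refl.
  by rewrite expsum_cons expsum_nil /= addr0; case: (x == y); apply: cong_refl.
- exact: (QX m hvw hle).
- exact: (PK m huv huw hvu huw_le).
- exact: (vK adj_sym adj_irr m huv huw hvu huw_le).
- exact: (nonadj_eq adj_sym adj_irr m huv huw hvw hY hvY hwY).
Qed.
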